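(* Let $\mathbf{L}\in\{\mathbf{K}_D,\mathbf{KD}_D,\mathbf{KT}_D\}$ and let $\Gamma\Rightarrow\Delta$ be a sequent. If $\Gamma\Rightarrow\Delta$ is valid in every finite model of the class $\mathbb{M}_{\mathbf{L}}$ (where $\mathbb{M}_{\mathbf{K}_D}=\mathbb{M}$, $\mathbb{M}_{\mathbf{KD}_D}=\mathbb{M}_{\mathbf{ser}}$, $\mathbb{M}_{\mathbf{KT}_D}=\mathbb{M}_{\mathbf{ref}}$), then $\mathsf{G}(\mathbf{L})\vdash\Gamma\Rightarrow\Delta$.
   Context: Language: fix a finite nonempty set $\mathsf{Agt}$ of agents and a countable set $\mathsf{Prop}$ of propositional variables; $\mathsf{Grp}$ is the set of nonempty subsets of $\mathsf{Agt}$. Formulas: $\alpha::=p\mid\bot\mid\alpha\wedge\alpha\mid\alpha\vee\alpha\mid\alpha\rightarrow\alpha\mid\neg\alpha\mid D_G\alpha$ ($p\in\mathsf{Prop}$, $G\in\mathsf{Grp}$). Outmost-boxed formula: one of the form $D_G\gamma$. Semantics: a model $M=(W,(R_G)_{G\in\mathsf{Grp}},V)$ has a set $W$ of states, binary relations $R_G$ on $W$ with $R_H\subseteq R_G$ whenever $G\subseteq H$, and $V:\mathsf{Prop}\to\mathcal P(W)$; it is finite if $W$ is finite. Truth is classical for connectives and $M,w\models D_G\alpha$ iff $M,v\models\alpha$ for all $v$ with $(w,v)\in R_G$. $\mathbb{M}$: all models; $\mathbb{M}_{\mathbf{ser}}$: models with $R_{\{a\}}$ serial for every $a\in\mathsf{Agt}$;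 $\mathbb{M}_{\mathbf{ref}}$: models with every $R_G$ reflexive. A sequent $\Gamma\Rightarrow\Delta$ is valid in a class if $\bigwedge\Gamma\rightarrow\bigvee\Delta$ is true at every state of every model in it (empty conjunction $\top$, empty disjunction $\bot$). Sequent calculi (sequents $\Gamma\Rightarrow\Delta$ are pairs of finite multisets; derivable = root of a finite tree built from initial sequents by rules): $\mathsf{G}(\mathbf{K}_D)$ has initial sequents $\Gamma,p\Rightarrow p,\Delta$ and $\bot,\Gamma\Rightarrow\Delta$; rules $(R\wedge)$ from $\Gamma\Rightarrow\Delta,\alpha_1$ and $\Gamma\Rightarrow\Delta,\alpha_2$ infer $\Gamma\Rightarrow\Delta,\alpha_1\wedge\alpha_2$; $(L\wedge)$ from $\alpha_1,\alpha_2,\Gamma\Rightarrow\Delta$ infer $\alpha_1\wedge\alpha_2,\Gamma\Rightarrow\Delta$; $(R\vee)$ from $\Gamma\Rightarrow\Delta,\alpha_1,\alpha_2$ infer $\Gamma\Rightarrow\Delta,\alpha_1\vee\alpha_2$; $(L\vee)$ from $\alpha_1,\Gamma\Rightarrow\Delta$ and $\alpha_2,\Gamma\Rightarrow\Delta$ infer $\alpha_1\vee\alpha_2,\Gamma\Rightarrow\Delta$; $(R\rightarrow)$ from $\alpha_1,\Gamma\Rightarrow\Delta,\alpha_2$ infer $\Gamma\Rightarrow\Delta,\alpha_1\rightarrow\alpha_2$; $(L\rightarrow)$ from $\Gamma\Rightarrow\Delta,\alpha_1$ and $\alpha_2,\Gamma\Rightarrow\Delta$ infer $\alpha_1\rightarrow\alpha_2,\Gamma\Rightarrow\Delta$;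 $(R\neg)$ from $\alpha,\Gamma\Rightarrow\Delta$ infer $\Gamma\Rightarrow\Delta,\neg\alpha$; $(L\neg)$ from $\Gamma\Rightarrow\Delta,\alpha$ infer $\neg\alpha,\Gamma\Rightarrow\Delta$; $(D_K)$: from $\alpha_1,\dots,\alpha_n\Rightarrow\beta$ ($n\ge0$) infer $\Sigma,D_{G_1}\alpha_1,\dots,D_{G_n}\alpha_n\Rightarrow D_G\beta,\Omega$ where all $G_i\subseteq G$, $\Sigma$ consists only of propositional variables, $\bot$, and $D_H\gamma$ with $H\not\subseteq G$, and $\Omega$ only of propositional variables, $\bot$, outmost-boxed formulas. $\mathsf{G}(\mathbf{KD}_D)$ adds $(D_D)$: from $\Gamma\Rightarrow$ with $\Gamma\neq\emptyset$ infer $\Sigma,D_{\{a\}}\Gamma\Rightarrow\Omega$, $\Sigma$ only propositional variables, $\bot$, $D_H\gamma$ with $H\neq\{a\}$; $\Omega$ only propositional variables, $\bot$, outmost-boxed formulas. $\mathsf{G}(\mathbf{KT}_D)$ adds to $\mathsf{G}(\mathbf{K}_D)$ $(D_T)$: from $D_G\alpha,\alpha,\Gamma\Rightarrow\Delta$ infer $D_G\alpha,\Gamma\Rightarrow\Delta$. *)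

(* Defs.v *)
From mathcomp Require Import all_boot.
From Stdlib Require Import List Permutation.
Set Implicit Arguments. Unset Strict Implicit. Unset Printing Implicit Defensive.

Section Defs.
Variable Agt : finType.

Definition Grp := {G : {set Agt} | G != set0}.

Inductive form : Type :=
| Var : nat -> form
| Bot : form
| And : form -> form -> form
| Or  : form -> form -> form
| Imp : form -> form -> form
| Neg : form -> form
| Box : Grp -> form -> form.

Lemma set1_nonempty (a : Agt) : [set a] != set0.
Proof. by apply/set0Pn; exists a; rewrite in_set1. Qed.

Definition sgrp (a : Agt) : Grp := exist _ [set a] (set1_nonempty a).

Definition subgrp (G H : Grp) : bool := val G \subset val H.

Definition sigmaK (G : Grp) (f : form) : Prop :=
  match f with
  | Var _ | Bot => True
  | Box H _ => ~~ subgrp H G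
  | _ => False
  end.

Definition sigmaD (a : Agt) (f : form) : Prop :=
  match f with
  | Var _ | Bot => True
  | Box H _ => val H <> [set a]
  | _ => False
  end.

Definition omegaOK (f : form) : Prop :=
  match f with
  | Var _ | Bot | Box _ _ => True
  | _ => False
  end.

Inductive logic : Type := LK | LKD | LKT.

(* Sequents are pairs of finite multisets, represented as lists modulo
   permutation (rule [d_perm]). *)
Inductive derivable (L : logic) : list form -> list form -> Prop :=
| d_perm G D G' D' : derivable L G D -> Permutation G G' -> Permutation D D' ->
    derivable L G' D'
| d_id p G D : derivable L (Var p :: G) (Var p :: D)
| d_bot G D : derivable L (Bot :: G) D
| d_Rand G D a b : derivable L G (a :: D) -> derivable L G (b :: D) ->
    derivable L G (And a b :: D)
| d_Land G D a b : derivable L (a :: b :: G) D -> derivable L (And a b :: G) D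
| d_Ror G D a b : derivable L G (a :: b :: D) -> derivable L G (Or a b :: D)
| d_Lor G D a b : derivable L (a :: G) D -> derivable L (b :: G) D ->
    derivable L (Or a b :: G) D
| d_Rimp G D a b : derivable L (a :: G) (b :: D) -> derivable L G (Imp a b :: D)
| d_Limp G D a b : derivable L G (a :: D) -> derivable L (b :: G) D ->
    derivable L (Imp a b :: G) D
| d_Rneg G D a : derivable L (a :: G) D -> derivable L G (Neg a :: D)
| d_Lneg G D a : derivable L G (a :: D) -> derivable L (Neg a :: G) D
| d_K (l : list (Grp * form)) (G : Grp) b Sig Om :
    derivable L (map snd l) [:: b] ->
    (forall x, In x l -> subgrp x.1 G) ->
    (forall f, In f Sig -> sigmaK G f) ->
    (forall f, In f Om -> omegaOK f) ->
    derivable L (Sig ++ map (fun x => Box x.1 x.2) l) (Box G b :: Om)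
| d_D (a : Agt) Gm Sig Om :
    L = LKD ->
    Gm <> nil ->
    derivable L Gm nil ->
    (forall f, In f Sig -> sigmaD a f) ->
    (forall f, In f Om -> omegaOK f) ->
    derivable L (Sig ++ map (Box (sgrp a)) Gm) Om
| d_T G D (H : Grp) a :
    L = LKT ->
    derivable L (Box H a :: a :: G) D -> derivable L (Box H a :: G) D.

Fixpoint sat (W : Type) (R : Grp -> W -> W -> Prop) (V : nat -> W -> Prop)
  (w : W) (f : form) : Prop :=
  match f with
  | Var p => V p w
  | Bot => False
  | And a b => sat R V w a /\ sat R V w b
  | Or a b => sat R V w a \/ sat R V w b
  | Imp a b => sat R V w a -> sat R V w b
  | Neg a => ~ sat R V w a
  | Box G a => forall v, R G w v -> sat R V v a
  end.

Definition monotone (W : Type) (R : Grp -> W -> W -> Prop) : Prop :=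
  forall G H : Grp, subgrp G H -> forall w v, R H w v -> R G w v.

Definition in_class (L : logic) (W : Type) (R : Grp -> W -> W -> Prop) : Prop :=
  match L with
  | LK => True
  | LKD => forall (a : Agt) (w : W), exists v, R (sgrp a) w v
  | LKT => forall (G : Grp) (w : W), R G w w
  end.

Definition seq_true (W : Type) (R : Grp -> W -> W -> Prop) (V : nat -> W -> Prop)
  (w : W) (Gm Dl : list form) : Prop :=
  (forall f, In f Gm -> sat R V w f) -> exists f, In f Dl /\ sat R V w f.

Definition valid_fin (L : logic) (Gm Dl : list form) : Prop :=
  forall (W : finType) (R : Grp -> W -> W -> Prop) (V : nat -> W -> Prop),
    monotone R -> in_class L R -> forall w : W, seq_true R V w Gm Dl.

End Defs.

(* Main.v *)
Require Import Defs.
From mathcomp Require Import all_boot.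
From Stdlib Require Import List Permutation.
From Stdlib Require Import Classical Lia.
From mathcomp Require Import zify.

Set Implicit Arguments. Unset Strict Implicit. Unset Printing Implicit Defensive.

Section Main.
Variable Agt : finType.
Notation form := (form Agt).
Notation Grp := (Grp Agt).

Definition grp_eq_dec (G H : Grp) : {G = H} + {G <> H}.
Proof.
case: G => g pg; case: H => h ph.
case: (eqVneq g h) => [e|ne].
  left; subst h; congr exist; exact: bool_irrelevance.
right => e; case: e => e'; by rewrite e' eqxx in ne.
Defined.

Definition form_eq_dec (x y : form) : {x = y} + {x <> y}.
Proof.
decide equality; first [apply grp_eq_dec | apply PeanoNat.Nat.eq_dec].
Defined.

Fixpoint dep (f : form) : nat := match f with
 | Var _ | Bot => 0
 | And a b | Or a b | Imp a b => maxn (dep a) (dep b)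
 | Neg a => dep a
 | Box _ a => (dep a).+1 end.

Fixpoint fsz (f : form) : nat := match f with
 | Var _ | Bot => 1
 | And a b | Or a b | Imp a b => (fsz a + fsz b).+1
 | Neg a => (fsz a).+1
 | Box _ a => (fsz a).+1 end.

Definition imm (f : form) : list form := match f with
 | And a b | Or a b | Imp a b => a :: b :: nil
 | Neg a | Box _ a => a :: nil
 | _ => nil end.

Fixpoint subf (f : form) : list form := f :: match f with
 | Var _ | Bot => nil
 | And a b | Or a b | Imp a b => app (subf a) (subf b)
 | Neg a | Box _ a => subf a end.

Lemma subf_self f : In f (subf f). Proof. by case: f => *; left. Qed.

Lemma subf_closed g f h : In f (subf g) -> In h (imm f) -> In h (subf g).
Proof.
elim: g f h => [p|| a IHa b IHb | a IHa b IHb | a IHa b IHb | a IHa | G a IHa] f h /=;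
 try (by case=> [<-|//]);
 try (case=> [<- /= [<-|[<-|[]]]|]; [right; apply/in_app_iff; left; exact: subf_self
   | right; apply/in_app_iff; right; exact: subf_self
   | move/in_app_iff=> [H1|H1] H2; right; apply/in_app_iff; [left; exact: IHa H1 H2 | right; exact: IHb H1 H2]]);
 (case=> [<- /= [<-|[]]|]; [right; exact: subf_self | move=> H1 H2; right; exact: IHa H1 H2]).
Qed.

Lemma dep_subf g f : In f (subf g) -> dep f <= dep g.
Proof.
elim: g f => [p|| a IHa b IHb | a IHa b IHb | a IHa b IHb | a IHa | G a IHa] f /=;
 try (by case=> [<-|//]);
 try (case=> [<- //|/in_app_iff [H|H]]; [move: (IHa _ H) | move: (IHb _ H)]; lia);
 (case=> [<- //|H]; move: (IHa _ H); lia).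
Qed.

Lemma dep_imm f h : In h (imm f) -> dep h <= dep f /\ (forall G a, f = Box G a -> dep h < dep f).
Proof.
case: f => [p||a b|a b|a b|a|G a] /=; try done;
  try (case=> [<-|[<-|[]]]; split=> //; lia);
  case=> [<-|[]]; split=> // *; lia.
Qed.


Definition inb (x : form) (l : list form) : bool := if in_dec form_eq_dec x l then true else false.
Lemma inbP x l : inb x l = true <-> In x l.
Proof. rewrite /inb; case: in_dec => //; split=> //. Qed.

Definition mis (Sub HL : list form) : nat := length (List.filter (fun x => ~~ inb x HL) Sub).

Lemma mis_mono Sub HL HL' : incl HL HL' -> mis Sub HL' <= mis Sub HL.
Proof.
move=> inc; rewrite /mis; elim: Sub => //= x S IH.
case E1: (inb x HL'); case E2: (inb x HL) => /=; try lia.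
move/inbP: E2 => /inc /inbP; by rewrite E1.
Qed.

Lemma mis_lt Sub HL HL' a : incl HL HL' -> In a Sub -> ~ In a HL -> In a HL' -> mis Sub HL' < mis Sub HL.
Proof.
move=> inc; rewrite /mis; elim: Sub => //= x S IH Ha nHL HL'a.
have HS := mis_mono S inc; rewrite /mis in HS.
case: (in_dec form_eq_dec a S) => [aS|naS].
  move: (IH aS nHL HL'a).
  case E1: (inb x HL'); case E2: (inb x HL) => /=; try lia.
  move/inbP: E2 => /inc /inbP; by rewrite E1.
have ex : x = a by case: Ha.
subst x.
have -> : inb a HL' = true by apply/inbP.
have -> : inb a HL = false by case E: (inb a HL) => //; move/inbP: E.
simpl; lia.
Qed.

Fixpoint szl (l : list form) : nat := match l with nil => 0 | f :: l => fsz f + szl l end.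
Lemma szl_perm l l' : Permutation l l' -> szl l = szl l'.
Proof. elim=> //= *; lia. Qed.
Lemma szl_app l l' : szl (app l l') = szl l + szl l'.
Proof. elim: l => //= *; lia. Qed.

Lemma cat_app (T : Type) (s t : list T) : cat s t = app s t.
Proof. by elim: s => //= x s ->. Qed.

Definition hL (HL HR : list form) (f : form) : Prop := match f with
 | And a b => In a HL /\ In b HL
 | Or a b => In a HL \/ In b HL
 | Imp a b => In a HR \/ In b HL
 | Neg a => In a HR
 | _ => False end.
Definition hR (HL HR : list form) (f : form) : Prop := match f with
 | And a b => In a HR \/ In b HR
 | Or a b => In a HR /\ In b HR
 | Imp a b => In a HL /\ In b HR
 | Neg a => In a HL
 | _ => False end.

Lemma hL_mono HL HR HL' HR' f : incl HL HL' -> incl HR HR' -> hL HL HR f -> hL HL' HR' f.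
Proof. case: f => //= *; intuition. Qed.
Lemma hR_mono HL HR HL' HR' f : incl HL HL' -> incl HR HR' -> hR HL HR f -> hR HL' HR' f.
Proof. case: f => //= *; intuition. Qed.

Definition Inv (Gm Dl HL HR : list form) : Prop :=
  incl Gm HL /\ incl Dl HR /\
  (forall f, In f HL -> In f Gm \/ hL HL HR f) /\
  (forall f, In f HR -> In f Dl \/ hR HL HR f).

Lemma inv_grow Gm Dl HL HR Gm' Dl' HL' HR' :
  Inv Gm Dl HL HR -> incl Gm Gm' -> incl Dl Dl' -> incl HL HL' -> incl HR HR' ->
  incl Gm' HL' -> incl Dl' HR' ->
  (forall f, In f HL' -> In f HL \/ In f Gm') -> (forall f, In f HR' -> In f HR \/ In f Dl') ->
  Inv Gm' Dl' HL' HR'.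
Proof.
move=> [i1 [i2 [i3 i4]]] g1 g2 g3 g4 g5 g6 g7 g8; split=> //; split=> //; split.
- move=> f /g7 [/i3 [/g1|]|]; auto. move=> h; right; exact: hL_mono h.
- move=> f /g8 [/i4 [/g2|]|]; auto. move=> h; right; exact: hR_mono h.
Qed.

Lemma inv_stepL Gm Dl HL HR Gm0 Gm' Dl' HL' HR' phi :
  Inv Gm Dl HL HR -> Permutation Gm (phi :: Gm0) -> incl Gm0 Gm' -> incl Dl Dl' ->
  incl HL HL' -> incl HR HR' -> incl Gm' HL' -> incl Dl' HR' -> hL HL' HR' phi ->
  (forall f, In f HL' -> In f HL \/ In f Gm') -> (forall f, In f HR' -> In f HR \/ In f Dl') ->
  Inv Gm' Dl' HL' HR'.
Proof.
move=> [i1 [i2 [i3 i4]]] P g1 g2 g3 g4 g5 g6 hp g7 g8; split=> //; split=> //; split.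
- move=> f /g7 [/i3 [H|]|]; auto.
  + move: (Permutation_in _ P H) => [<-|/g1]; auto.
  + move=> h; right; exact: hL_mono h.
- move=> f /g8 [/i4 [/g2|]|]; auto. move=> h; right; exact: hR_mono h.
Qed.

Lemma inv_stepR Gm Dl HL HR Dl0 Gm' Dl' HL' HR' phi :
  Inv Gm Dl HL HR -> Permutation Dl (phi :: Dl0) -> incl Gm Gm' -> incl Dl0 Dl' ->
  incl HL HL' -> incl HR HR' -> incl Gm' HL' -> incl Dl' HR' -> hR HL' HR' phi ->
  (forall f, In f HL' -> In f HL \/ In f Gm') -> (forall f, In f HR' -> In f HR \/ In f Dl') ->
  Inv Gm' Dl' HL' HR'.
Proof.
move=> [i1 [i2 [i3 i4]]] P g1 g2 g3 g4 g5 g6 hp g7 g8; split=> //; split=> //; split.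
- move=> f /g7 [/i3 [/g1|]|]; auto. move=> h; right; exact: hL_mono h.
- move=> f /g8 [/i4 [H|]|]; auto.
  + move: (Permutation_in _ P H) => [<-|/g2]; auto.
  + move=> h; right; exact: hR_mono h.
Qed.


Record pm := PM { pW : finType; pR : Grp -> pW -> pW -> Prop; pV : nat -> pW -> Prop; proot : pW }.
Definition psat (M : pm) (w : pW M) f := sat (@pR M) (@pV M) w f.
Definition good L (M : pm) := monotone (@pR M) /\ in_class L (@pR M).
Definition CM L HL HR := exists M, good L M /\ (forall f, In f HL -> psat (proot M) f)
   /\ (forall f, In f HR -> ~ psat (proot M) f).

Lemma pmorph (W1 W2 : Type) (R1 : Grp -> W1 -> W1 -> Prop) V1 (R2 : Grp -> W2 -> W2 -> Prop) V2 (h : W1 -> W2) :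
  (forall G x y, R1 G x y -> R2 G (h x) (h y)) ->
  (forall G x v, R2 G (h x) v -> exists y, v = h y /\ R1 G x y) ->
  (forall p x, V2 p (h x) <-> V1 p x) ->
  forall f x, sat R2 V2 (h x) f <-> sat R1 V1 x f.
Proof.
move=> fo ba hv; elim=> [p||a IHa b IHb|a IHa b IHb|a IHa b IHb|a IHa|G a IHa] x /=.
- exact: hv.
- done.
- by rewrite IHa IHb.
- by rewrite IHa IHb.
- by rewrite IHa IHb.
- by rewrite IHa.
- split=> H v.
  + move=> r; apply/IHa; apply: H; exact: fo.
  + move=> /ba [y [-> r]]; apply/IHa; exact: H.
Qed.

Fixpoint sumW (cs : list (Grp * pm)) : finType := match cs with
 | nil => void : finType
 | c :: cs' => ((pW c.2 + sumW cs')%type : finType) end.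

Fixpoint sumR (cs : list (Grp * pm)) : Grp -> sumW cs -> sumW cs -> Prop :=
 match cs return Grp -> sumW cs -> sumW cs -> Prop with
 | nil => fun _ _ _ => False
 | c :: cs' => fun G u v => match u, v with
     | inl x, inl y => @pR c.2 G x y
     | inr x, inr y => @sumR cs' G x y
     | _, _ => False end end.

Fixpoint sumV (cs : list (Grp * pm)) : nat -> sumW cs -> Prop :=
 match cs return nat -> sumW cs -> Prop with
 | nil => fun _ _ => False
 | c :: cs' => fun p u => match u with
     | inl x => @pV c.2 p x
     | inr y => @sumV cs' p y end end.

Fixpoint rootR (cs : list (Grp * pm)) : Grp -> sumW cs -> Prop :=
 match cs return Grp -> sumW cs -> Prop with
 | nil => fun _ _ => False
 | c :: cs' => fun G u => match u with
     | inl x => subgrp G c.1 /\ x = proot c.2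
     | inr y => @rootR cs' G y end end.
Arguments sumR : clear implicits.
Arguments sumV : clear implicits.
Arguments rootR : clear implicits.

Definition ssat cs (u : sumW cs) f := sat (sumR cs) (sumV cs) u f.
Arguments ssat : clear implicits.

Lemma ssat_inl c cs (x : pW c.2) f : ssat (c :: cs) (inl x) f <-> psat x f.
Proof.
apply: (pmorph (R1 := @pR c.2) (V1 := @pV c.2) (R2 := sumR (c :: cs)) (V2 := sumV (c :: cs)) (h := inl)) => //.
by move=> G x0 [y|y] //= r; exists y.
Qed.

Lemma ssat_inr c cs (x : sumW cs) f : ssat (c :: cs) (inr x) f <-> ssat cs x f.
Proof.
apply: (pmorph (R1 := sumR cs) (V1 := sumV cs) (R2 := sumR (c :: cs)) (V2 := sumV (c :: cs)) (h := inr)) => //.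
by move=> G x0 [y|y] //= r; exists y.
Qed.

Lemma rootR_back cs G v : rootR cs G v -> exists c, In c cs /\ subgrp G c.1 /\
   forall f, ssat cs v f <-> psat (proot c.2) f.
Proof.
elim: cs v => [|c cs IH] /=; first by [].
case=> [x|y].
- move=> [s ->]; exists c; split; [by left|split=> // f]; exact: ssat_inl.
- move=> /IH [c' [i [s e]]]; exists c'; split; [by right|split=> // f].
  rewrite -e; exact: ssat_inr.
Qed.

Lemma rootR_forth cs G c : In c cs -> subgrp G c.1 -> exists v, rootR cs G v /\
   forall f, ssat cs v f <-> psat (proot c.2) f.
Proof.
elim: cs => [|c' cs IH] //= [e|i] s.
- subst c'; exists (inl (proot c.2)); split=> // f; exact: ssat_inl.
- have [v [r e]] := IH i s; exists (inr v); split=> // f; rewrite -e; exact: ssat_inr.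
Qed.

Lemma sumR_mono cs : (forall c, In c cs -> monotone (@pR c.2)) -> monotone (sumR cs).
Proof.
elim: cs => [|c cs IH] H G H' s; first by [].
case=> [x|x] [y|y] //=.
- exact: (H c (or_introl erefl) G H' s x y).
- apply: (IH _ G H' s x y) => c' i; apply: H; by right.
Qed.

Lemma rootR_mono cs G H v : subgrp G H -> rootR cs H v -> rootR cs G v.
Proof.
elim: cs v => [|c cs IH] /=; first by [].
case=> [x|y] /= s.
- move=> [s' ->]; split=> //; exact: subset_trans s s'.
- exact: IH.
Qed.

Lemma sumR_ser cs : (forall c, In c cs -> forall a w, exists v, @pR c.2 (sgrp a) w v) ->
  forall a u, exists v, sumR cs (sgrp a) u v.
Proof.
elim: cs => [|c cs IH] H a; first by [].
case=> [x|y] //=.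
- have [v r] := H c (or_introl erefl) a x; by exists (inl v).
- have [v r] := IH (fun c' i => H c' (or_intror i)) a y; by exists (inr v).
Qed.

Lemma sumR_refl cs : (forall c, In c cs -> forall G w, @pR c.2 G w w) ->
  forall G u, sumR cs G u u.
Proof.
elim: cs => [|c cs IH] H G; first by [].
case=> [x|y] //=.
- exact: H (or_introl erefl) G x.
- exact: IH (fun c' i => H c' (or_intror i)) G y.
Qed.

Definition glueW cs : finType := (option (sumW cs) : finType).
Definition glueR cs (rf : Prop) (G : Grp) (u v : glueW cs) : Prop :=
  match u, v with
  | None, None => rf
  | None, Some y => rootR cs G y
  | Some x, Some y => sumR cs G x y
  | Some _, None => False end.
Definition glueV cs (Vr : nat -> Prop) (p : nat) (u : glueW cs) : Prop :=
  match u with None => Vr p | Some x => sumV cs p x end.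
Definition glue cs rf Vr : pm := @PM (glueW cs) (@glueR cs rf) (@glueV cs Vr) None.

Lemma glue_some cs rf Vr (x : sumW cs) f : @psat (glue cs rf Vr) (Some x) f <-> ssat cs x f.
Proof.
apply: (pmorph (R1 := sumR cs) (V1 := sumV cs) (R2 := @glueR cs rf) (V2 := @glueV cs Vr) (h := Some)) => //.
by move=> G x0 [y|] //= r; exists y.
Qed.


Lemma glue_good L cs (Vr : nat -> Prop) :
  (forall c, In c cs -> good L c.2) ->
  (L = LKD -> forall a, exists c, In c cs /\ c.1 = sgrp a) ->
  good L (glue cs (L = LKT) Vr).
Proof.
move=> Hc Hd; split.
- have M : monotone (sumR cs) by apply: sumR_mono => c i; exact: (Hc c i).1.
  move=> G H s [x|] [y|] //=.
  + exact: M G H s x y.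
  + exact: rootR_mono.
- move: Hd; case: L Hc => //= Hc Hd.
  + move=> a [x|].
    * have [y r] := sumR_ser (cs := cs) (fun c i => (Hc c i).2) a x; by exists (Some y).
    * have [c [i e]] := Hd erefl a.
      have s : subgrp (sgrp a) c.1 by rewrite e /subgrp subxx.
      have [v [r _]] := rootR_forth i s.
      by exists (Some v).
  + move=> G [x|] //=; exact: sumR_refl (fun c i => (Hc c i).2) G x.
Qed.

Lemma glue_box cs rf Vr G a :
  @psat (glue cs rf Vr) None (Box G a) <->
  ((rf -> @psat (glue cs rf Vr) None a) /\ (forall c, In c cs -> subgrp G c.1 -> psat (proot c.2) a)).
Proof.
split.
- move=> H; split.
  + move=> r; exact: (H None r).
  + move=> c i s; have [v [r e]] := rootR_forth i s.
    apply/e; apply/(glue_some (cs:=cs) rf Vr); exact: (H (Some v) r).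
- move=> [H1 H2] [y|] /=.
  + move=> /rootR_back [c [i [s e]]].
    apply/(glue_some (cs:=cs) rf Vr); apply/e; exact: H2.
  + exact: H1.
Qed.

Lemma collect (X : Type) (xs : list X) (g : X -> Grp) (Q : X -> pm -> Prop) :
  (forall x, In x xs -> exists M, Q x M) ->
  exists cs : list (Grp * pm), (forall c, In c cs -> exists x, In x xs /\ c.1 = g x /\ Q x c.2) /\
    (forall x, In x xs -> exists M, In (g x, M) cs /\ Q x M).
Proof.
elim: xs => [|x xs IH] H.
  by exists nil; split.
have [M q] := H x (or_introl erefl).
have [cs [h1 h2]] := IH (fun y i => H y (or_intror i)).
exists ((g x, M) :: cs); split.
- move=> c [<-|i].
  + by exists x; split; [left|].
  + have [y [i' e]] := h1 c i; exists y; split=> //; by right.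
- move=> y [<-|i].
  + exists M; split=> //; by left.
  + have [M' [i' q']] := h2 y i; exists M'; split=> //; by right.
Qed.

Lemma inP (T : eqType) (x : T) (s : list T) : reflect (In x s) (x \in s).
Proof.
elim: s => [|y s IH] /=; first by constructor.
rewrite seq.in_cons; case: eqP => [->|ne] /=; first by constructor; left.
case: IH => h; constructor; first by right.
by case=> // e; apply: ne.
Qed.

Definition bpf (G : Grp) (f : form) : list (Grp * form) :=
  match f with Box H a => if subgrp H G then (H, a) :: nil else nil | _ => nil end.
Definition bp G (l : list form) := flat_map (bpf G) l.
Definition keep G (f : form) : bool := match f with Box H _ => ~~ subgrp H G | _ => true end.
Definition rest G (l : list form) := List.filter (keep G) l.
Definition bodies G l := map snd (bp G l).
Definition ncomp (f : form) : Prop := match f with Var _ | Bot | Box _ _ => True | _ => False end.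

Lemma perm_split G l : Permutation l (app (rest G l) (map (fun x => Box x.1 x.2) (bp G l))).
Proof.
elim: l => [|f l IH] //=.
case: f => [p||a b|a b|a b|a|H a] /=; try exact: perm_skip.
case: (subgrp H G) => /=; last exact: perm_skip.
exact: Permutation_cons_app.
Qed.

Lemma bp_sub G l x : In x (bp G l) -> subgrp x.1 G /\ In (Box x.1 x.2) l.
Proof.
elim: l => [|f l IH] //= /in_app_iff [Hx|/IH [? ?]]; last by split=> //; right.
move: Hx; case: f => //= H a; case E: (subgrp H G) => //=; case=> [<-|[]] /=; split=> //; by left.
Qed.

Lemma bodies_in G l H a : In (Box H a) l -> subgrp H G -> In a (bodies G l).
Proof.
rewrite /bodies /bp; elim: l => [|f l IH] //= [->|i] s /=; rewrite map_app; apply/in_app_iff.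
- by left; rewrite s; left.
- by right; apply: IH.
Qed.

Lemma rest_sigK G l : (forall f, In f l -> ncomp f) -> forall f, In f (rest G l) -> sigmaK G f.
Proof.
move=> H f /filter_In [/H]; by case: f.
Qed.

Lemma sub_sgrp (H : Grp) a : subgrp H (sgrp a) -> H = sgrp a.
Proof.
case: H => h ph; rewrite /subgrp /= subset1 => /orP [/eqP e|/eqP e].
- move: ph; rewrite e => ph; rewrite /sgrp; congr exist; exact: bool_irrelevance.
- by exfalso; move/eqP: ph.
Qed.

Lemma rest_sigD a l : (forall f, In f l -> ncomp f) -> forall f, In f (rest (sgrp a) l) -> sigmaD a f.
Proof.
move=> H f /filter_In [/H]; case: f => //= G b _ ns e.
have e2 : val G = val (sgrp a) by exact: e.
by move: ns; rewrite /subgrp e2 subxx.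
Qed.

Lemma bp_sgrp a l : map (fun x => Box x.1 x.2) (bp (sgrp a) l) = map (Box (sgrp a)) (bodies (sgrp a) l).
Proof.
rewrite /bodies map_map; apply: map_ext_in => x /bp_sub [/sub_sgrp e _]; by rewrite e.
Qed.


Definition P L d := forall Gm Dl, (forall f, In f Gm \/ In f Dl -> dep f <= d) ->
  derivable L Gm Dl \/ CM L Gm Dl.

Definition boxesR (l : list form) : list (Grp * form) :=
  flat_map (fun f => match f with Box G b => (G, b) :: nil | _ => nil end) l.

Lemma boxesR_in l G b : In (G, b) (boxesR l) -> In (Box G b) l.
Proof.
elim: l => [|f l IH] //= /in_app_iff [|/IH]; last by right.
case: f => //= H a [[<- <-]|[]]; by left.
Qed.

Lemma boxesR_in' l G b : In (Box G b) l -> In (G, b) (boxesR l).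
Proof.
elim: l => [|f l IH] //= [->|i]; apply/in_app_iff; [left; by left|right; exact: IH].
Qed.

Lemma bodies_box G l f : In f (bodies G l) -> exists H, In (Box H f) l.
Proof.
rewrite /bodies => /in_map_iff [x [<- /bp_sub [_ i]]]; by exists x.1.
Qed.

Definition triv : pm := @PM (unit : finType) (fun _ _ _ => True) (fun _ _ => False) tt.
Lemma triv_good L : good L triv.
Proof. split=> //; case: L => //= a w; by exists tt. Qed.

Lemma ncomp_omega f : ncomp f -> omegaOK f.
Proof. by case: f. Qed.

Lemma leaf L d Sub Gm Dl HL HR :
  (forall d', d' < d -> P L d') ->
  (forall f, In f Sub -> dep f <= d) ->
  incl Gm Sub -> incl Dl Sub ->
  Inv Gm Dl HL HR ->
  (forall f, In f Gm -> ncomp f) -> (forall f, In f Dl -> ncomp f) ->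
  (L = LKT -> forall H a, In (Box H a) Gm -> In a HL) ->
  derivable L Gm Dl \/ CM L HL HR.
Proof.
move=> IH dS iG iD [i1 [i2 [i3 i4]]] nG nD satT.
case: (classic (In (Bot Agt) Gm)) => [hb|nb].
  left; have [l1 [l2 e]] := in_split _ _ hb; subst Gm.
  apply: (d_perm (d_bot L (app l1 l2) Dl)); [exact: Permutation_middle | exact: Permutation_refl].
case: (classic (exists p, In (Var Agt p) Gm /\ In (Var Agt p) Dl)) => [[p [h1 h2]]|nv].
  left; have [l1 [l2 e1]] := in_split _ _ h1; have [m1 [m2 e2]] := in_split _ _ h2; subst.
  apply: (d_perm (d_id L p (app l1 l2) (app m1 m2))); exact: Permutation_middle.
case: (classic (exists G b, In (Box G b) Dl /\ derivable L (bodies G Gm) (b :: nil))) => [[G [b [h1 h2]]]|nk].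
  left; have [m1 [m2 e2]] := in_split _ _ h1.
  have om : forall f, In f (app m1 m2) -> omegaOK f.
    move=> f /in_app_iff hf; apply: ncomp_omega; apply: nD; rewrite e2; apply/in_app_iff.
    by case: hf => hf; [left|right; right].
  have Hk := d_K (l := bp G Gm) (Sig := rest G Gm) (Om := app m1 m2) h2 (fun x i => (bp_sub i).1)
     (rest_sigK (G:=G) nG) om.
  apply: (d_perm Hk).
  - rewrite cat_app; apply: Permutation_sym; exact: perm_split.
  - rewrite e2; exact: Permutation_middle.
case: (classic (L = LKD /\ exists a, bodies (sgrp a) Gm <> nil /\ derivable L (bodies (sgrp a) Gm) nil)) => [[eL [a [ne hd]]]|nd].
  left.
  have Hd := d_D (a:=a) (Sig := rest (sgrp a) Gm) (Om := Dl) eL ne hd (rest_sigD nG)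
    (fun f i => ncomp_omega (nD f i)).
  apply: (d_perm Hd); last exact: Permutation_refl.
  rewrite -bp_sgrp cat_app; apply: Permutation_sym; exact: perm_split.
have C1 : forall x, In x (boxesR Dl) -> exists M, good L M /\
    (forall f, In f (bodies x.1 Gm) -> psat (proot M) f) /\ ~ psat (proot M) x.2.
  move=> [G b] /boxesR_in /= hin.
  have db := dS _ (iD _ hin); simpl in db.
  have := IH (d - 1) ltac:(lia) (bodies G Gm) (b :: nil).
  case.
  - move=> f [/bodies_box [H hH] | [<-|[]]]; last lia.
    have := dS _ (iG _ hH); simpl; lia.
  - move=> hd; exfalso; apply: nk; by exists G, b.
  - move=> [M [g [h1 h2]]]; exists M; split=> //; split=> //; apply: h2; by left.
have C2 : forall a, In a (if L is LKD then enum Agt else nil) -> exists M, good L M /\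
    (forall f, In f (bodies (sgrp a) Gm) -> psat (proot M) f).
  move=> a ia; have eL : L = LKD by move: ia; case: (L).
  case E: (bodies (sgrp a) Gm) => [|f0 fs].
    exists triv; split; [exact: triv_good | by []].
  have [H hH] : exists H, In (Box H f0) Gm by apply: (bodies_box (G := sgrp a)); rewrite E; left.
  have dh := dS _ (iG _ hH); simpl in dh.
  have := IH (d - 1) ltac:(lia) (f0 :: fs) nil.
  case.
  - move=> f [hf|[]]; rewrite -E in hf; have [H' hH'] := bodies_box hf.
    have := dS _ (iG _ hH'); simpl; lia.
  - move=> hd; exfalso; apply: nd; split=> //; exists a; rewrite E; by split.
  - move=> [M [g [h1 _]]]; exists M; split=> //.
have [cs1 [s11 s12]] := collect fst C1.
have [cs2 [s21 s22]] := collect (@sgrp Agt) C2.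
have S : forall c, In c (app cs1 cs2) -> good L c.2 /\ forall f, In f (bodies c.1 Gm) -> psat (proot c.2) f.
  move=> c /in_app_iff [/s11 [x [_ [-> [g [h _]]]]]|/s21 [x [_ [-> [g h]]]]]; by split.
have CB : forall G b, In (Box G b) Dl -> exists M, In (G, M) (app cs1 cs2) /\ ~ psat (proot M) b.
  move=> G b /boxesR_in' /s12 [M [i [_ [_ h]]]]; exists M; split=> //; apply/in_app_iff; by left.
have CD : L = LKD -> forall a, exists c, In c (app cs1 cs2) /\ c.1 = sgrp a.
  move=> eL a; have ia : In a (if L is LKD then enum Agt else nil).
    rewrite eL; apply/inP; by rewrite mem_enum.
  have [M [i _]] := s22 a ia; exists (sgrp a, M); split=> //; apply/in_app_iff; by right.
have TL : forall f, (In f HL -> @psat (glue (app cs1 cs2) (L = LKT) (fun p => In (Var Agt p) Gm)) None f) /\ (In f HR -> ~ @psat (glue (app cs1 cs2) (L = LKT) (fun p => In (Var Agt p) Gm)) None f).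
  elim=> [p||a IHa b IHb|a IHa b IHb|a IHa b IHb|a IHa|G a IHa]; split.
  - by move=> /i3 [h|[]].
  - move=> /i4 [h|[]] /= hv; apply: nv; by exists p.
  - by move=> /i3 [h|[]].
  - by move=> _ h.
  - move=> /i3 [/nG []|[ha hb]]; split; [exact: (IHa.1 ha)|exact: (IHb.1 hb)].
  - move=> /i4 [/nD []|[ha|hb]] [pa pb]; [exact: IHa.2 ha pa|exact: IHb.2 hb pb].
  - move=> /i3 [/nG []|[ha|hb]]; [left; exact: (IHa.1 ha)|right; exact: (IHb.1 hb)].
  - move=> /i4 [/nD []|[ha hb]] [pa|pb]; [exact: IHa.2 ha pa|exact: IHb.2 hb pb].
  - move=> /i3 [/nG []|[ha|hb]] pa; [exfalso; exact: IHa.2 ha pa|exact: (IHb.1 hb)].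
  - move=> /i4 [/nD []|[ha hb]] pi; exact: IHb.2 hb (pi (IHa.1 ha)).
  - move=> /i3 [/nG []|ha] pa; exact: IHa.2 ha pa.
  - move=> /i4 [/nD []|ha] pn; exact: pn (IHa.1 ha).
  - move=> /i3 [h|[]]; apply/glue_box; split.
    + move=> eT; apply: IHa.1; exact: satT eT G a h.
    + move=> c ic s; have [_ hc] := S c ic; apply: hc; exact: bodies_in h s.
  - move=> /i4 [h|[]] pb; have [M' [iM nb']] := CB G a h.
    move/glue_box: pb => [_ H2]; apply: nb'; apply: (H2 (G, M') iM); exact: subxx.
right; exists (glue (app cs1 cs2) (L = LKT) (fun p => In (Var Agt p) Gm)); split.
  apply: glue_good => // c i; exact: (S c i).1.
split=> f hf; [exact: (TL f).1 hf|exact: (TL f).2 hf].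
Qed.


Lemma CM_sub L HL HR HL' HR' : incl HL HL' -> incl HR HR' -> CM L HL' HR' -> CM L HL HR.
Proof.
move=> a b [M [g [h1 h2]]]; exists M; split=> //; split=> f hf; [exact: h1 (a _ hf)|exact: h2 (b _ hf)].
Qed.

Ltac solve_in := let x := fresh "x" in move=> x /=; rewrite ?in_app_iff; intuition (subst; auto).

Lemma inner L d Sub :
  (forall d', d' < d -> P L d') ->
  (forall f, In f Sub -> dep f <= d) ->
  (forall f g, In f Sub -> In g (imm f) -> In g Sub) ->
  forall m s Gm Dl HL HR, mis Sub HL = m -> szl Gm + szl Dl = s ->
  incl Gm Sub -> incl Dl Sub -> Inv Gm Dl HL HR ->
  derivable L Gm Dl \/ CM L HL HR.
Proof.
move=> IH dS cS.
elim/ltn_ind => m IHm s.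
elim/ltn_ind: s => s IHs Gm Dl HL HR em es iG iD inv.
have REC : forall Gm' Dl' HL' HR', incl HL HL' -> incl HR HR' ->
    (mis Sub HL' < m \/ szl Gm' + szl Dl' < s) ->
    incl Gm' Sub -> incl Dl' Sub -> Inv Gm' Dl' HL' HR' -> derivable L Gm' Dl' \/ CM L HL HR.
  move=> Gm' Dl' HL' HR' h1 h2 hm g1 g2 g3.
  have hmo := mis_mono Sub h1; rewrite em in hmo.
  suff HH : derivable L Gm' Dl' \/ CM L HL' HR'.
    case: HH => [|c]; [by left|right; exact: CM_sub h1 h2 c].
  case: (ltnP (mis Sub HL') m) => hlt.
  - exact: (IHm _ hlt _ Gm' Dl' HL' HR' erefl erefl).
  - have e : mis Sub HL' = m by lia.
    have hs : szl Gm' + szl Dl' < s by case: hm; lia.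
    exact: (IHs _ hs Gm' Dl' HL' HR' e erefl).
have [i1 [i2 [i3 i4]]] := inv.
case: (classic (exists f, In f Gm /\ ~ ncomp f)) => [[f [hf nf]]|nG].
  have [l1 [l2 e]] := in_split _ _ hf.
  have Hp : Permutation Gm (f :: app l1 l2) by rewrite e; apply: Permutation_sym; exact: Permutation_middle.
  have hG0 : incl (app l1 l2) Gm by move=> x hx; apply: (Permutation_in _ (Permutation_sym Hp)); right.
  have sz := szl_perm Hp; simpl in sz.
  have cf := cS _ _ (iG _ hf).
  clear e.
  case: f hf nf Hp sz cf => [p||a b|a b|a b|a|H a] hf nf Hp sz cf; try (exfalso; exact: nf);
    try (have sa : In a Sub by apply: cf; left);
    try (have sb : In b Sub by apply: cf; right; left).
  -
    have HH : derivable L (a :: b :: app l1 l2) Dl \/ CM L HL HR.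
      apply: (REC _ _ (a :: b :: HL) HR).
      + move=> x hx; right; right; exact hx.
      + move=> x hx; exact hx.
      + right; simpl in sz |- *; move: sz es; lia.
      + move=> x [<-|[<-|hx]]; [exact sa|exact sb|exact: iG (hG0 _ hx)].
      + exact: iD.
      + apply: (inv_stepL inv Hp).
        * move=> x hx; right; right; exact hx.
        * move=> x hx; exact hx.
        * move=> x hx; right; right; exact hx.
        * move=> x hx; exact hx.
        * move=> x [<-|[<-|hx]]; [left|right; left|right; right; exact: i1 (hG0 _ hx)]; done.
        * exact: i2.
        * simpl; split; [left|right; left]; done.
        * move=> x [<-|[<-|hx]]; [right; left|right; right; left|left]; done.
        * move=> x hx; by left.
    case: HH => [hd|]; [left|by right].
    apply: (d_perm (d_Land hd)); [exact: Permutation_sym Hp|exact: Permutation_refl].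
  -
    have HH1 : derivable L (a :: app l1 l2) Dl \/ CM L HL HR.
      apply: (REC _ _ (a :: HL) HR).
      + move=> x hx; right; exact hx.
      + move=> x hx; exact hx.
      + right; simpl in sz |- *; move: sz es; lia.
      + move=> x [<-|hx]; [exact sa|exact: iG (hG0 _ hx)].
      + exact: iD.
      + apply: (inv_stepL inv Hp).
        * move=> x hx; right; exact hx.
        * move=> x hx; exact hx.
        * move=> x hx; right; exact hx.
        * move=> x hx; exact hx.
        * move=> x [<-|hx]; [left|right; exact: i1 (hG0 _ hx)]; done.
        * exact: i2.
        * simpl; left; left; done.
        * move=> x [<-|hx]; [right; left|left]; done.
        * move=> x hx; by left.
    have HH2 : derivable L (b :: app l1 l2) Dl \/ CM L HL HR.
      apply: (REC _ _ (b :: HL) HR).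
      + move=> x hx; right; exact hx.
      + move=> x hx; exact hx.
      + right; simpl in sz |- *; move: sz es; lia.
      + move=> x [<-|hx]; [exact sb|exact: iG (hG0 _ hx)].
      + exact: iD.
      + apply: (inv_stepL inv Hp).
        * move=> x hx; right; exact hx.
        * move=> x hx; exact hx.
        * move=> x hx; right; exact hx.
        * move=> x hx; exact hx.
        * move=> x [<-|hx]; [left|right; exact: i1 (hG0 _ hx)]; done.
        * exact: i2.
        * simpl; right; left; done.
        * move=> x [<-|hx]; [right; left|left]; done.
        * move=> x hx; by left.
    case: HH1 => [hd1|]; last by right.
    case: HH2 => [hd2|]; last by right.
    left; apply: (d_perm (d_Lor hd1 hd2)); [exact: Permutation_sym Hp|exact: Permutation_refl].
  -
    have HH1 : derivable L (app l1 l2) (a :: Dl) \/ CM L HL HR.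
      apply: (REC _ _ HL (a :: HR)).
      + move=> x hx; exact hx.
      + move=> x hx; right; exact hx.
      + right; simpl in sz |- *; move: sz es; lia.
      + move=> x hx; exact: iG (hG0 _ hx).
      + move=> x [<-|hx]; [exact sa|exact: iD hx].
      + apply: (inv_stepL inv Hp).
        * move=> x hx; exact hx.
        * move=> x hx; right; exact hx.
        * move=> x hx; exact hx.
        * move=> x hx; right; exact hx.
        * move=> x hx; exact: i1 (hG0 _ hx).
        * move=> x [<-|hx]; [left|right; exact: i2 hx]; done.
        * simpl; left; left; done.
        * move=> x hx; by left.
        * move=> x [<-|hx]; [right; left|left]; done.
    have HH2 : derivable L (b :: app l1 l2) Dl \/ CM L HL HR.
      apply: (REC _ _ (b :: HL) HR).
      + move=> x hx; right; exact hx.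
      + move=> x hx; exact hx.
      + right; simpl in sz |- *; move: sz es; lia.
      + move=> x [<-|hx]; [exact sb|exact: iG (hG0 _ hx)].
      + exact: iD.
      + apply: (inv_stepL inv Hp).
        * move=> x hx; right; exact hx.
        * move=> x hx; exact hx.
        * move=> x hx; right; exact hx.
        * move=> x hx; exact hx.
        * move=> x [<-|hx]; [left|right; exact: i1 (hG0 _ hx)]; done.
        * exact: i2.
        * simpl; right; left; done.
        * move=> x [<-|hx]; [right; left|left]; done.
        * move=> x hx; by left.
    case: HH1 => [hd1|]; last by right.
    case: HH2 => [hd2|]; last by right.
    left; apply: (d_perm (d_Limp hd1 hd2)); [exact: Permutation_sym Hp|exact: Permutation_refl].
  -
    have HH : derivable L (app l1 l2) (a :: Dl) \/ CM L HL HR.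
      apply: (REC _ _ HL (a :: HR)).
      + move=> x hx; exact hx.
      + move=> x hx; right; exact hx.
      + right; simpl in sz |- *; move: sz es; lia.
      + move=> x hx; exact: iG (hG0 _ hx).
      + move=> x [<-|hx]; [exact sa|exact: iD hx].
      + apply: (inv_stepL inv Hp).
        * move=> x hx; exact hx.
        * move=> x hx; right; exact hx.
        * move=> x hx; exact hx.
        * move=> x hx; right; exact hx.
        * move=> x hx; exact: i1 (hG0 _ hx).
        * move=> x [<-|hx]; [left|right; exact: i2 hx]; done.
        * simpl; left; done.
        * move=> x hx; by left.
        * move=> x [<-|hx]; [right; left|left]; done.
    case: HH => [hd|]; [left|by right].
    apply: (d_perm (d_Lneg hd)); [exact: Permutation_sym Hp|exact: Permutation_refl].
have nG' : forall f, In f Gm -> ncomp f.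
  move=> f hf; apply: NNPP => nf; apply: nG; by exists f.
case: (classic (exists f, In f Dl /\ ~ ncomp f)) => [[f [hf nf]]|nD].
  have [l1 [l2 e]] := in_split _ _ hf.
  have Hp : Permutation Dl (f :: app l1 l2) by rewrite e; apply: Permutation_sym; exact: Permutation_middle.
  have hD0 : incl (app l1 l2) Dl by move=> x hx; apply: (Permutation_in _ (Permutation_sym Hp)); right.
  have sz := szl_perm Hp; simpl in sz.
  have cf := cS _ _ (iD _ hf).
  clear e.
  case: f hf nf Hp sz cf => [p||a b|a b|a b|a|H a] hf nf Hp sz cf; try (exfalso; exact: nf);
    try (have sa : In a Sub by apply: cf; left);
    try (have sb : In b Sub by apply: cf; right; left).
  -
    have HH1 : derivable L Gm (a :: app l1 l2) \/ CM L HL HR.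
      apply: (REC _ _ HL (a :: HR)).
      + move=> x hx; exact hx.
      + move=> x hx; right; exact hx.
      + right; simpl in sz |- *; move: sz es; lia.
      + exact: iG.
      + move=> x [<-|hx]; [exact sa|exact: iD (hD0 _ hx)].
      + apply: (inv_stepR inv Hp).
        * move=> x hx; exact hx.
        * move=> x hx; right; exact hx.
        * move=> x hx; exact hx.
        * move=> x hx; right; exact hx.
        * exact: i1.
        * move=> x [<-|hx]; [left|right; exact: i2 (hD0 _ hx)]; done.
        * simpl; left; left; done.
        * move=> x hx; by left.
        * move=> x [<-|hx]; [right; left|left]; done.
    have HH2 : derivable L Gm (b :: app l1 l2) \/ CM L HL HR.
      apply: (REC _ _ HL (b :: HR)).
      + move=> x hx; exact hx.
      + move=> x hx; right; exact hx.
      + right; simpl in sz |- *; move: sz es; lia.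
      + exact: iG.
      + move=> x [<-|hx]; [exact sb|exact: iD (hD0 _ hx)].
      + apply: (inv_stepR inv Hp).
        * move=> x hx; exact hx.
        * move=> x hx; right; exact hx.
        * move=> x hx; exact hx.
        * move=> x hx; right; exact hx.
        * exact: i1.
        * move=> x [<-|hx]; [left|right; exact: i2 (hD0 _ hx)]; done.
        * simpl; right; left; done.
        * move=> x hx; by left.
        * move=> x [<-|hx]; [right; left|left]; done.
    case: HH1 => [hd1|]; last by right.
    case: HH2 => [hd2|]; last by right.
    left; apply: (d_perm (d_Rand hd1 hd2)); [exact: Permutation_refl|exact: Permutation_sym Hp].
  -
    have HH : derivable L Gm (a :: b :: app l1 l2) \/ CM L HL HR.
      apply: (REC _ _ HL (a :: b :: HR)).
      + move=> x hx; exact hx.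
      + move=> x hx; right; right; exact hx.
      + right; simpl in sz |- *; move: sz es; lia.
      + exact: iG.
      + move=> x [<-|[<-|hx]]; [exact sa|exact sb|exact: iD (hD0 _ hx)].
      + apply: (inv_stepR inv Hp).
        * move=> x hx; exact hx.
        * move=> x hx; right; right; exact hx.
        * move=> x hx; exact hx.
        * move=> x hx; right; right; exact hx.
        * exact: i1.
        * move=> x [<-|[<-|hx]]; [left|right; left|right; right; exact: i2 (hD0 _ hx)]; done.
        * simpl; split; [left|right; left]; done.
        * move=> x hx; by left.
        * move=> x [<-|[<-|hx]]; [right; left|right; right; left|left]; done.
    case: HH => [hd|]; [left|by right].
    apply: (d_perm (d_Ror hd)); [exact: Permutation_refl|exact: Permutation_sym Hp].
  -
    have HH : derivable L (a :: Gm) (b :: app l1 l2) \/ CM L HL HR.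
      apply: (REC _ _ (a :: HL) (b :: HR)).
      + move=> x hx; right; exact hx.
      + move=> x hx; right; exact hx.
      + right; simpl in sz |- *; move: sz es; lia.
      + move=> x [<-|hx]; [exact sa|exact: iG hx].
      + move=> x [<-|hx]; [exact sb|exact: iD (hD0 _ hx)].
      + apply: (inv_stepR inv Hp).
        * move=> x hx; right; exact hx.
        * move=> x hx; right; exact hx.
        * move=> x hx; right; exact hx.
        * move=> x hx; right; exact hx.
        * move=> x [<-|hx]; [left|right; exact: i1 hx]; done.
        * move=> x [<-|hx]; [left|right; exact: i2 (hD0 _ hx)]; done.
        * simpl; split; left; done.
        * move=> x [<-|hx]; [right; left|left]; done.
        * move=> x [<-|hx]; [right; left|left]; done.
    case: HH => [hd|]; [left|by right].
    apply: (d_perm (d_Rimp hd)); [exact: Permutation_refl|exact: Permutation_sym Hp].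
  -
    have HH : derivable L (a :: Gm) (app l1 l2) \/ CM L HL HR.
      apply: (REC _ _ (a :: HL) HR).
      + move=> x hx; right; exact hx.
      + move=> x hx; exact hx.
      + right; simpl in sz |- *; move: sz es; lia.
      + move=> x [<-|hx]; [exact sa|exact: iG hx].
      + move=> x hx; exact: iD (hD0 _ hx).
      + apply: (inv_stepR inv Hp).
        * move=> x hx; right; exact hx.
        * move=> x hx; exact hx.
        * move=> x hx; right; exact hx.
        * move=> x hx; exact hx.
        * move=> x [<-|hx]; [left|right; exact: i1 hx]; done.
        * move=> x hx; exact: i2 (hD0 _ hx).
        * simpl; left; done.
        * move=> x [<-|hx]; [right; left|left]; done.
        * move=> x hx; by left.
    case: HH => [hd|]; [left|by right].
    apply: (d_perm (d_Rneg hd)); [exact: Permutation_refl|exact: Permutation_sym Hp].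
have nD' : forall f, In f Dl -> ncomp f.
  move=> f hf; apply: NNPP => nf; apply: nD; by exists f.
case: (classic (L = LKT /\ exists H a, In (Box H a) Gm /\ ~ In a HL)) => [[eL [H [a [hb na]]]]|nT].
  have [l1 [l2 e]] := in_split _ _ hb.
  have Hp : Permutation Gm (Box H a :: app l1 l2) by rewrite e; apply: Permutation_sym; exact: Permutation_middle.
  have hG0 : incl (app l1 l2) Gm by move=> x hx; apply: (Permutation_in _ (Permutation_sym Hp)); right.
  have sa : In a Sub by apply: (cS _ _ (iG _ hb)); left.
  have HH : derivable L (Box H a :: a :: app l1 l2) Dl \/ CM L HL HR.
    apply: (REC _ _ (a :: HL) HR).
    + move=> x hx; right; exact hx.
    + move=> x hx; exact hx.
    + left; rewrite -em; apply: (@mis_lt Sub HL (a :: HL) a) => //; [move=> x hx; right; exact hx|left; done].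
    + move=> x [<-|[<-|hx]]; [exact: iG hb|exact sa|exact: iG (hG0 _ hx)].
    + exact: iD.
    + apply: (inv_grow inv).
      * move=> x /(Permutation_in _ Hp) [<-|hx]; [left|right; right]; done.
      * move=> x hx; exact hx.
      * move=> x hx; right; exact hx.
      * move=> x hx; exact hx.
      * move=> x [<-|[<-|hx]]; [right; exact: i1 hb|left|right; exact: i1 (hG0 _ hx)]; done.
      * exact: i2.
      * move=> x [<-|hx]; [right; right; left|left]; done.
      * move=> x hx; by left.
  case: HH => [hd|]; [left|by right].
  apply: (d_perm (d_T eL hd)); [exact: Permutation_sym Hp|exact: Permutation_refl].
apply: (leaf IH dS iG iD inv nG' nD').
move=> eL H a hb; apply: NNPP => na; apply: nT; split=> //; exists H, a; by split.
Qed.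

Fixpoint mdep (l : list form) : nat := match l with nil => 0 | f :: l => dep f + mdep l end.
Lemma mdep_in f l : In f l -> dep f <= mdep l.
Proof. elim: l => //= g l IH [->|/IH]; lia. Qed.

Lemma outer L d : P L d.
Proof.
elim/ltn_ind: d => d IH Gm Dl hd.
pose Sub := flat_map subf (app Gm Dl).
have dS : forall f, In f Sub -> dep f <= d.
  move=> f /in_flat_map [g [hg hf]]; have := dep_subf hf; have := hd g (in_app_or _ _ _ hg); lia.
have cS : forall f g, In f Sub -> In g (imm f) -> In g Sub.
  move=> f g /in_flat_map [h [hh hf]] hg; apply/in_flat_map; exists h; split=> //; exact: subf_closed hf hg.
have iG : incl Gm Sub.
  move=> f hf; apply/in_flat_map; exists f; split; [apply: in_or_app; by left|exact: subf_self].
have iD : incl Dl Sub.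
  move=> f hf; apply/in_flat_map; exists f; split; [apply: in_or_app; by right|exact: subf_self].
apply: (inner IH dS cS erefl erefl iG iD).
split; [move=> x hx; exact hx|split; [move=> x hx; exact hx|split=> f hf; by left]].
Qed.

End Main.

Theorem theorem4p8 (Agt : finType) (Hne : 0 < #|Agt|) (L : logic)
  (Gm Dl : list (form Agt)) :
  valid_fin L Gm Dl -> derivable L Gm Dl.
Proof.
move=> V.
have [//|[M [[mo ic] [h1 h2]]]] := @outer Agt L (mdep (app Gm Dl)) Gm Dl
  (fun f hf => mdep_in (in_or_app _ _ _ hf)).
have [f [i s]] := V (pW M) (@pR _ M) (@pV _ M) mo ic (proot M) h1.
exfalso; exact: h2 f i s.
Qed.
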